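(* Suppose $(T;C_1,\dots,C_w)$ forms a $w$-wheel ($w\ge4$) with sectors $S_1,\dots,S_w$ (indices modulo $w$). Then for all $i\neq j$, the set $C(i,j)=C_i\cup T\cup C_j$ is a $\kappa$-cut that disconnects $D(i,j)$ from the rest of the graph. Moreover, if $j-i\not\equiv 1$ and $j-i\not\equiv w-1\pmod w$, then $C(i,j)$ has exactly two sides, namely $D(i,j)$ and $D(j,i)$. Furthermore $|C_i|=\frac{\kappa-|T|}{2}$ for every $i$.
   Context: $G=(V,E)$ is a finite, simple, connected, undirected, non-complete graph; $\kappa$ is its vertex connectivity. A cut is a set $U\subset V$ whose removal disconnects $G$; a $\kappa$-cut is a cut of size $\kappa$; a side of a cut is a connected component of the graph after removing it. A set $S$ disconnects $P$ from the rest of the graph if $P\ne\emptyset$, $P\cap S=\emptyset$, $V\setminus(S\cup P)\ne\emptyset$ and every path from $P$ to $V\setminus(S\cup P)$ meets $S$. Wheels: for $w\ge4$ (indices modulo $w$), if $V$ is partitioned into pairwise disjoint sets $T,C_1,\dots,C_w,S_1,\dots,S_w$ with all $C_i,S_i$ nonempty ($T$ may be empty) such that for every $i$ the set $C_i\cup T\cup C_{i+2}$ is a $\kappa$-cut that disconnects $S_i\cup C_{i+1}\cup S_{i+1}$ from the rest of the graph, then $(T;C_1,\dots,C_w)$ forms a $w$-wheel with sectors $S_1,\dots,S_w$ (center $T$, spokes $C_i$). For $i\ne j$, $C(i,j)=C_i\cup T\cup C_j$ and $D(i,j)=S_i\cup C_{i+1}\cup S_{i+1}\cup\cdots\cup C_{j-1}\cup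 S_{j-1}$ (going cyclically from $i$ to $j-1$; in particular $D(i,i+1)=S_i$). *)

(* Defs.v *)
From mathcomp Require Import all_boot.
Set Implicit Arguments. Unset Strict Implicit. Unset Printing Implicit Defensive.

Section Graphs.
Variable V : finType.
Variable e : rel V.

Definition induced (A : {set V}) : rel V :=
  fun x y => [&& x \in A, y \in A & e x y].

Definition path_in (A : {set V}) (x y : V) : bool :=
  [&& x \in A, y \in A & connect (induced A) x y].

Definition is_cut (U : {set V}) : bool :=
  [exists x, exists y, [&& x \notin U, y \notin U & ~~ path_in (~: U) x y]].

(* vertex connectivity: minimum size of a cut (|V| if there is none,
   which does not happen for non-complete graphs) *)
Definition kappa : nat :=
  \big[minn/#|V|]_(U : {set V} | is_cut U) #|U|.

Definition is_kcut (U : {set V}) : Prop := is_cut U /\ #|U| = kappa.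

Definition is_side (U P : {set V}) : Prop :=
  exists2 x, x \notin U & P = [set y | path_in (~: U) x y].

Definition disconnects (S P : {set V}) : Prop :=
  [/\ P != set0, P :&: S = set0, ~: (S :|: P) != set0 &
      forall x y, x \in P -> y \in ~: (S :|: P) -> ~~ path_in (~: S) x y].

(* Wheels.  Spokes and sectors are indexed by nat, read modulo w
   (only the values C i, S i for i < w matter; we always write C (i %% w)). *)
Definition Cij (w : nat) (T : {set V}) (C : nat -> {set V}) (i j : nat) :=
  C (i %% w) :|: T :|: C (j %% w).

(* D(i,j) = S_i u C_{i+1} u S_{i+1} u ... u C_{j-1} u S_{j-1} *)
Definition Dij (w : nat) (C S : nat -> {set V}) (i j : nat) : {set V} :=
  let d := (j + w - i %% w) %% w in
  (\bigcup_(k < d) S ((i + k) %% w)) :|: (\bigcup_(1 <= k < d) C ((i + k) %% w)).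

Definition is_wheel (w : nat) (T : {set V}) (C S : nat -> {set V}) : Prop :=
  4 <= w /\
  T :|: \bigcup_(i < w) (C i :|: S i) = setT /\
  (forall i, i < w -> C i != set0 /\ S i != set0) /\
  (forall i j, i < w -> j < w -> i != j ->
      C i :&: C j = set0 /\ S i :&: S j = set0) /\
  (forall i j, i < w -> j < w -> C i :&: S j = set0) /\
  (forall i, i < w -> T :&: C i = set0 /\ T :&: S i = set0) /\
  (forall i, i < w ->
      is_kcut (Cij w T C i (i + 2)) /\
      disconnects (Cij w T C i (i + 2))
                  (S i :|: C ((i + 1) %% w) :|: S ((i + 1) %% w))).

End Graphs.

Definition simple_graph (V : finType) (e : rel V) : Prop :=
  symmetric e /\ irreflexive e.
Definition connected_graph (V : finType) (e : rel V) : Prop :=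
  forall x y, connect e x y.
Definition non_complete (V : finType) (e : rel V) : Prop :=
  exists x y, x != y /\ ~~ e x y.

(* Main.v *)
Require Import Defs.
From mathcomp Require Import all_boot.
From mathcomp Require Import zify.
Set Implicit Arguments. Unset Strict Implicit. Unset Printing Implicit Defensive.

Lemma bigmin_le (I : finType) (P : pred I) (F : I -> nat) x0 j :
  P j -> \big[minn/x0]_(i | P i) F i <= F j.
Proof.
move=> Pj; have := mem_index_enum j; elim: (index_enum I) => //= a r IH.
rewrite inE big_cons => /orP[/eqP<-|/IH H].
  by rewrite Pj geq_minl.
by case: (P a) => //; rewrite geq_min H orbT.
Qed.

Section Generic.
Variables (V : finType) (e : rel V).
Hypothesis esym : symmetric e.

Lemma induced_sym (A : {set V}) : symmetric (induced e A).
Proof. by move=> x y; rewrite /induced andbCA esym. Qed.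

Lemma path_in_sym (A : {set V}) x y : path_in e A x y = path_in e A y x.
Proof.
rewrite /path_in andbCA; congr (_ && (_ && _)).
by rewrite (sym_connect_sym (induced_sym A)).
Qed.

Lemma path_in_trans (A : {set V}) x y z :
  path_in e A x y -> path_in e A y z -> path_in e A x z.
Proof.
case/and3P=> hx _ Hxy /and3P[_ hz Hyz]; rewrite /path_in hx hz /=.
exact: connect_trans Hxy Hyz.
Qed.

Lemma path_in_edge (A : {set V}) x y : x \in A -> y \in A -> e x y -> path_in e A x y.
Proof. by move=> hx hy hxy; rewrite /path_in hx hy connect1 // /induced hx hy. Qed.

Lemma path_in_refl (A : {set V}) x : x \in A -> path_in e A x x.
Proof. by move=> hx; rewrite /path_in hx connect0. Qed.

Lemma path_in_sub (A B : {set V}) x y : A \subset B -> path_in e A x y -> path_in e B x y.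
Proof.
move=> /subsetP sAB /and3P[hx hy h]; rewrite /path_in !sAB //=.
apply: connect_sub h => u v /and3P[hu hv huv]; apply: connect1.
by rewrite /induced !sAB.
Qed.

Lemma path_in_closed (A : {set V}) (P : {set V}) x y :
  (forall z z', z \in P -> z' \in A -> e z z' -> z' \in P) ->
  x \in P -> path_in e A x y -> y \in P.
Proof.
move=> cl hx /and3P[_ _ /connectP[p pth ->]].
elim: p x hx pth => //= a p IH x hx /andP[/and3P[_ ha hxa] pth].
exact: IH (cl _ _ hx ha hxa) pth.
Qed.

Lemma kappa_le (U : {set V}) : is_cut e U -> kappa e <= #|U|.
Proof. by move=> h; rewrite /kappa; apply: bigmin_le. Qed.

Lemma disc_closed (U P : {set V}) x y :
  disconnects e U P -> x \in P -> e x y -> (y \in U) || (y \in P).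
Proof.
case=> _ PU _ H hx hxy; apply/negPn/negP; rewrite negb_or => /andP[yU yP].
have xU : x \notin U.
  by apply/negP=> xU; move/setP: PU => /(_ x); rewrite inE hx xU inE.
have := H x y hx; rewrite !inE negb_or yU yP => /(_ isT) /negP; apply.
by apply: path_in_edge => //; rewrite inE.
Qed.

Section Cl.
Variables (U P : {set V}).
Hypotheses (P0 : P != set0) (PU : P :&: U = set0) (R0 : ~: (U :|: P) != set0)
  (cl : forall z z', z \in P -> e z z' -> z' \notin U -> z' \in P).

Lemma closed_nopath x y : x \in P -> y \in ~: (U :|: P) -> ~~ path_in e (~: U) x y.
Proof.
move=> hx hy; apply/negP=> /(path_in_closed _ hx) h.
have : y \in P by apply: h => z z' hz; rewrite inE => hz' hzz'; exact: cl hzz' hz'.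
by move: hy; rewrite !inE negb_or => /andP[_ /negP].
Qed.

Lemma closed_disc : disconnects e U P.
Proof. split=> //; exact: closed_nopath. Qed.

Lemma notinU x : x \in P -> x \notin U.
Proof. by move=> hx; apply/negP=> xU; move/setP: PU => /(_ x); rewrite inE hx xU inE. Qed.

Lemma closed_cut : is_cut e U.
Proof.
case/set0Pn: P0 => x hx; case/set0Pn: R0 => y hy.
apply/existsP; exists x; apply/existsP; exists y.
rewrite notinU //= closed_nopath // andbT.
by move: hy; rewrite !inE negb_or => /andP[].
Qed.

End Cl.
Lemma mincut_nbr (U P : {set V}) u : P != set0 -> P :&: U = set0 -> ~: (U :|: P) != set0 ->
  (forall z z', z \in P -> e z z' -> z' \notin U -> z' \in P) ->
  #|U| = kappa e -> u \in U -> exists2 t, t \in P & e u t.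
Proof.
move=> P0 PU R0 cl.
move=> hk hu; case: (boolP [exists t, (t \in P) && e u t]).
  by case/existsP=> t /andP[]; exists t.
rewrite negb_exists => /forallP hn.
have cl' : forall z z', z \in P -> e z z' -> z' \notin U :\ u -> z' \in P.
  move=> z z' hz hzz'; rewrite !inE negb_and negbK => /orP[/eqP eu|]; last exact: cl hzz'.
  by move: (hn z); rewrite hz /= -eu esym hzz'.
have PU' : P :&: (U :\ u) = set0.
  apply/setP=> z; rewrite !inE; case hz: (z \in P) => //=.
  by rewrite (negbTE (notinU PU hz)) andbF.
have R0' : ~: ((U :\ u) :|: P) != set0.
  case/set0Pn: R0 => y hy; apply/set0Pn; exists y; move: hy; rewrite !inE !negb_or.
  by case/andP=> hU hP; rewrite hP negb_and hU orbT.
have := kappa_le (closed_cut P0 PU' R0' cl').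
rewrite -hk (cardsD1 u U) hu /=; lia.
Qed.
End Generic.

Section Wheel.
Variables (V : finType) (e : rel V) (w : nat) (T : {set V}) (C S : nat -> {set V}).
Hypothesis esym : symmetric e.
Hypothesis W : is_wheel e w T C S.

Lemma w4 : 4 <= w. Proof. by case: W. Qed.
Lemma w0 : 0 < w. Proof. by have := w4; lia. Qed.

Lemma mem_bigcup_seq (r : seq nat) (F : nat -> {set V}) x :
  reflect (exists2 k, k \in r & x \in F k) (x \in \bigcup_(k <- r) F k).
Proof.
elim: r => [|a r IH]; first by rewrite big_nil inE; constructor; case.
rewrite big_cons inE; apply: (iffP orP).
  by case=> [h|/IH[k hk hx]]; [exists a; rewrite ?inE ?eqxx|exists k; rewrite // inE hk orbT].
case=> k; rewrite inE => /orP[/eqP->|hk hx]; first by left.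
by right; apply/IH; exists k.
Qed.

Lemma modD_inj k a b : (k + a) %% w = (k + b) %% w -> a < w -> b < w -> a = b.
Proof.
move/eqP; rewrite eqn_modDl => /eqP h ha hb.
by move: h; rewrite !modn_small.
Qed.

Lemma modD_inj0 k b : k %% w = (k + b) %% w -> b < w -> b = 0.
Proof. move=> h hb; have h' : (k + 0) %% w = (k + b) %% w by rewrite addn0. by rewrite -(modD_inj h' (w0) hb). Qed.

Lemma modD_inj0' k b : (k + b) %% w = k %% w -> b < w -> b = 0.
Proof. by move=> h; apply: (modD_inj0 (sym_eq h)). Qed.

Lemma mod_lt k : k %% w < w. Proof. by rewrite ltn_pmod // w0. Qed.

Lemma CC a b x : x \in C (a %% w) -> x \in C (b %% w) -> a %% w = b %% w.
Proof.
move=> ha hb; apply/eqP; apply/negPn/negP=> hne.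
case: W => _ [_ [_ [D _]]]; have [/setP h _] := D _ _ (mod_lt a) (mod_lt b) hne.
by move: (h x); rewrite inE ha hb inE.
Qed.

Lemma SS a b x : x \in S (a %% w) -> x \in S (b %% w) -> a %% w = b %% w.
Proof.
move=> ha hb; apply/eqP; apply/negPn/negP=> hne.
case: W => _ [_ [_ [D _]]]; have [_ /setP h] := D _ _ (mod_lt a) (mod_lt b) hne.
by move: (h x); rewrite inE ha hb inE.
Qed.

Lemma CSf a b x : x \in C (a %% w) -> x \in S (b %% w) -> False.
Proof.
move=> ha hb; case: W => _ [_ [_ [_ [D _]]]]; move/setP: (D _ _ (mod_lt a) (mod_lt b)).
by move/(_ x); rewrite inE ha hb inE.
Qed.

Lemma TCf a x : x \in T -> x \in C (a %% w) -> False.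
Proof.
move=> ha hb; case: W => _ [_ [_ [_ [_ [D _]]]]]; have [/setP h _] := D _ (mod_lt a).
by move: (h x); rewrite inE ha hb inE.
Qed.

Lemma TSf a x : x \in T -> x \in S (a %% w) -> False.
Proof.
move=> ha hb; case: W => _ [_ [_ [_ [_ [D _]]]]]; have [_ /setP h] := D _ (mod_lt a).
by move: (h x); rewrite inE ha hb inE.
Qed.

Lemma Cne a : C (a %% w) != set0.
Proof. by case: W => _ [_ [D _]]; case: (D _ (mod_lt a)). Qed.
Lemma Sne a : S (a %% w) != set0.
Proof. by case: W => _ [_ [D _]]; case: (D _ (mod_lt a)). Qed.

Lemma cover x : x \in T \/ exists m, (x \in C (m %% w)) || (x \in S (m %% w)).
Proof.
case: W => _ [cv _]; have : x \in [set: V] by [].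
rewrite -cv inE; case/orP=> [hT|/bigcupP[m _ hm]]; first by left.
by right; exists m; rewrite modn_small // -in_setU.
Qed.

Lemma wheel_at b :
  is_kcut e (C (b %% w) :|: T :|: C ((b + 2) %% w)) /\
  disconnects e (C (b %% w) :|: T :|: C ((b + 2) %% w))
     (S (b %% w) :|: C ((b + 1) %% w) :|: S ((b + 1) %% w)).
Proof.
case: W => _ [_ [_ [_ [_ [_ H]]]]]; have := H _ (mod_lt b).
by rewrite /Cij !modnDml !modn_mod.
Qed.

Lemma wheel_cl b x y :
  (x \in S (b %% w)) || (x \in C ((b + 1) %% w)) || (x \in S ((b + 1) %% w)) -> e x y ->
  [|| y \in C (b %% w), y \in T, y \in C ((b + 2) %% w), y \in S (b %% w),
      y \in C ((b + 1) %% w) | y \in S ((b + 1) %% w)].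
Proof.
move=> hx hxy; have [_ D] := wheel_at b.
have := disc_closed D _ hxy; rewrite !inE; move/(_ hx).
by case/orP=> [/orP[/orP[]|]|/orP[/orP[]|]] ->; rewrite ?orbT.
Qed.

Lemma cardU0 (A B : {set V}) : A :&: B = set0 -> #|A :|: B| = #|A| + #|B|.
Proof. by move=> h; rewrite cardsU h cards0 subn0. Qed.

Lemma card3 a b : a %% w != b %% w ->
  #|C (a %% w) :|: T :|: C (b %% w)| = #|C (a %% w)| + #|T| + #|C (b %% w)|.
Proof.
move=> hab; rewrite cardU0 ?cardU0 //.
  by apply/setP=> x; rewrite !inE; apply/negP=> /andP[h1 h2]; exact: TCf h2 h1.
apply/setP=> x; rewrite !inE; apply/negP=> /andP[/orP[h1|h1] h2].
  by move: hab; rewrite (CC h1 h2) eqxx.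
exact: TCf h1 h2.
Qed.


Ltac modcontra E := exfalso; move: (w4) => ?;
  first [ move: (modD_inj E); lia
        | move: (modD_inj0 E); lia
        | move: (modD_inj0' E); lia ].

Ltac clash := match goal with H1 : _, H2 : _ |- _ =>
  first [ exfalso; exact: TCf H1 H2 | exfalso; exact: TSf H1 H2 | exfalso; exact: CSf H1 H2
        | let E := fresh "E" in have E := CC H1 H2; modcontra E
        | let E := fresh "E" in have E := SS H1 H2; modcontra E ] end.

Ltac split6 h := case/orP: h => [h|/orP[h|/orP[h|/orP[h|/orP[h|h]]]]].

Lemma N1 k x y : x \in S (k %% w) -> e x y ->
  [|| y \in S (k %% w), y \in C (k %% w), y \in C ((k + 1) %% w) | y \in T].
Proof.
move=> hx hxy; have w4' := w4.
have e1 : (k + (w - 1) + 1) %% w = k %% w by rewrite -addnA subnK ?modnDr //; lia.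
have e2 : (k + (w - 1) + 2) %% w = (k + 1) %% w.
  by rewrite -addnA (_ : w - 1 + 2 = 1 + w) ?addnA ?modnDr //; lia.
have h1 := wheel_cl (b := k + (w - 1)) (x := x) (y := y); rewrite e1 e2 hx /= in h1.
have h2 := wheel_cl (b := k) (x := x) (y := y); rewrite hx /= in h2.
have {}h1 := h1 (orbT _) hxy; have {}h2 := h2 isT hxy.
split6 h1; rewrite ?h1 ?orbT //; split6 h2; clash.
Qed.

Lemma N2 k x y : x \in C ((k + 1) %% w) -> e x y ->
  [|| y \in C (k %% w), y \in T, y \in C ((k + 2) %% w), y \in S (k %% w),
      y \in C ((k + 1) %% w) | y \in S ((k + 1) %% w)].
Proof. by move=> hx; apply: wheel_cl; rewrite hx orbT. Qed.


Lemma modD_neq b a : 0 < a < w -> (b + a) %% w != b %% w.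
Proof. move=> ha; apply/eqP=> E; modcontra E. Qed.

Lemma size_at b a : #|C ((b + a) %% w)| + #|T| + #|C ((b + (a + 2)) %% w)| = kappa e.
Proof.
have [[_ <-] _] := wheel_at (b + a); rewrite addnA card3 //.
rewrite eq_sym; apply: modD_neq; have := w4; lia.
Qed.

Lemma cut_adj b : is_cut e (C (b %% w) :|: T :|: C ((b + 1) %% w)).
Proof.
have w4' := w4.
apply: (@closed_cut _ e _ (S (b %% w))); first exact: Sne.
- apply/setP=> x; rewrite !inE; apply/negP=> /andP[hx /orP[/orP[h|h]|h]]; clash.
- case/set0Pn: (Sne (b + 2)) => z hz; apply/set0Pn; exists z; rewrite !inE.
  apply/negP=> /orP[/orP[/orP[h|h]|h]|h]; clash.
- move=> z z' hz hzz'; rewrite !inE; have := N1 hz hzz'.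
  by case/orP=> [->//|/orP[->|/orP[->|->]]]; rewrite ?orbT.
Qed.

Lemma adj_ge b a : kappa e <= #|C ((b + a) %% w)| + #|T| + #|C ((b + (a + 1)) %% w)|.
Proof.
have := kappa_le (cut_adj (b + a)); rewrite addnA card3 //.
rewrite eq_sym; apply: modD_neq; have := w4; lia.
Qed.

Lemma Csize i : i < w -> 2 * #|C i| = kappa e - #|T|.
Proof.
move=> hi; have hC : C i = C ((i + 0) %% w) by rewrite addn0 modn_small.
have h0 : #|C ((i + 0) %% w)| + #|T| + #|C ((i + 2) %% w)| = kappa e := size_at i 0.
have h1 : #|C ((i + 1) %% w)| + #|T| + #|C ((i + 3) %% w)| = kappa e := size_at i 1.
have h2 : #|C ((i + 2) %% w)| + #|T| + #|C ((i + 4) %% w)| = kappa e := size_at i 2.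
have g0 : kappa e <= #|C ((i + 0) %% w)| + #|T| + #|C ((i + 1) %% w)| := adj_ge i 0.
have g1 : kappa e <= #|C ((i + 1) %% w)| + #|T| + #|C ((i + 2) %% w)| := adj_ge i 1.
have g2 : kappa e <= #|C ((i + 2) %% w)| + #|T| + #|C ((i + 3) %% w)| := adj_ge i 2.
have g3 : kappa e <= #|C ((i + 3) %% w)| + #|T| + #|C ((i + 4) %% w)| := adj_ge i 3.
rewrite hC; lia.
Qed.


Lemma Cnorm k : k < w -> C k = C (k %% w).
Proof. by move=> h; rewrite modn_small. Qed.

Lemma size_adj k : #|C (k %% w) :|: T :|: C ((k + 1) %% w)| = kappa e.
Proof.
rewrite card3; last by rewrite eq_sym; apply: modD_neq; have := w4; lia.
have h1 := Csize (mod_lt k); have h2 := Csize (mod_lt (k + 1)).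
have h0 := size_at k 0; rewrite addn0 in h0; lia.
Qed.

Lemma Lnbr k s u : s \in S (k %% w) -> (u \in C (k %% w)) || (u \in C ((k + 1) %% w)) ->
  exists2 t, path_in e (S (k %% w)) s t & e u t.
Proof.
move=> hs hu; have w4' := w4.
have inS t : path_in e (S (k %% w)) s t -> t \in S (k %% w) by case/and3P.
suff [t ht hut] : exists2 t, t \in [set t | path_in e (S (k %% w)) s t] & e u t.
  by exists t; rewrite inE in ht.
apply: (@mincut_nbr _ e esym (C (k %% w) :|: T :|: C ((k + 1) %% w))).
- by apply/set0Pn; exists s; rewrite inE path_in_refl.
- apply/setP=> x; rewrite !inE; apply/negP=> /andP[/inS hx /orP[/orP[h|h]|h]]; clash.
- case/set0Pn: (Sne (k + 2)) => z hz; apply/set0Pn; exists z; rewrite !inE.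
  apply/negP=> /orP[/orP[/orP[h|h]|h]|/inS h]; clash.
- move=> z z' hz hzz'; rewrite !inE in hz *; have := N1 (inS _ hz) hzz'.
  case/orP=> [h _|/orP[->|/orP[->|->]]]; rewrite ?orbT //.
  exact: (path_in_trans hz (path_in_edge (inS _ hz) h hzz')).
- exact: size_adj.
- by rewrite !inE; case/orP: hu => ->; rewrite ?orbT.
Qed.

Lemma Lconn (A : {set V}) k s u : S (k %% w) \subset A -> u \in A ->
  (u \in C (k %% w)) || (u \in C ((k + 1) %% w)) -> s \in S (k %% w) ->
  path_in e A u s.
Proof.
move=> sA uA hu hs; have [t hst hut] := Lnbr hs hu.
have tA : t \in A by case/and3P: hst => _ /(subsetP sA).
apply: path_in_trans (path_in_edge uA tA hut) _.
by rewrite path_in_sym //; apply: path_in_sub hst.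
Qed.


Lemma dd_val i j : i < w -> j < w ->
  (j + w - i %% w) %% w = if i <= j then j - i else j + w - i.
Proof.
move=> hi hj; rewrite (modn_small hi); case: leqP => h.
  by rewrite (_ : j + w - i = (j - i) + w) ?modnDr ?modn_small //; lia.
by rewrite modn_small //; lia.
Qed.

Lemma dd_end i j : i < w -> j < w -> (i + (j + w - i %% w) %% w) %% w = j.
Proof.
move=> hi hj; rewrite dd_val //; case: leqP => h.
  by rewrite (_ : i + (j - i) = j) ?modn_small //; lia.
by rewrite (_ : i + (j + w - i) = j + w) ?modnDr ?modn_small //; lia.
Qed.

Lemma Dij_eq i j : Dij w C S i j =
  (\bigcup_(k < (j + w - i %% w) %% w) S ((i + k) %% w)) :|:
  (\bigcup_(1 <= k < (j + w - i %% w) %% w) C ((i + k) %% w)).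
Proof. by []. Qed.

Lemma DS i j k m x : k < (j + w - i %% w) %% w -> (i + k) %% w = m %% w ->
  x \in S (m %% w) -> x \in Dij w C S i j.
Proof.
move=> hk hm hx; rewrite Dij_eq inE; apply/orP; left.
by apply/bigcupP; exists (Ordinal hk) => //=; rewrite hm.
Qed.

Lemma DC i j k m x : 0 < k < (j + w - i %% w) %% w -> (i + k) %% w = m %% w ->
  x \in C (m %% w) -> x \in Dij w C S i j.
Proof.
move=> hk hm hx; rewrite Dij_eq inE; apply/orP; right.
by apply/mem_bigcup_seq; exists k; rewrite ?mem_index_iota ?hm.
Qed.

Lemma Dcase i j x : x \in Dij w C S i j ->
  (exists k, k < (j + w - i %% w) %% w /\ x \in S ((i + k) %% w)) \/
  (exists k, 0 < k < (j + w - i %% w) %% w /\ x \in C ((i + k) %% w)).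
Proof.
rewrite Dij_eq inE => /orP[/bigcupP[k _ hk]|/mem_bigcup_seq[k hk hx]].
  by left; exists k.
by right; exists k; rewrite mem_index_iota in hk.
Qed.

Section Pair.
Variables i j : nat.
Hypotheses (hi : i < w) (hj : j < w) (hij : i != j).
Local Notation d := ((j + w - i %% w) %% w).
Local Notation U := (Cij w T C i j).
Local Notation D := (Dij w C S i j).

Lemma d_bounds : 0 < d < w.
Proof. rewrite dd_val //; have := hij; move/eqP => ?; case: (leqP i j) => ? /=; lia. Qed.

Lemma U_eq : U = C ((i + 0) %% w) :|: T :|: C ((i + d) %% w).
Proof. by rewrite /Cij addn0 dd_end // (modn_small hj). Qed.

Lemma D_disj : D :&: U = set0.
Proof.
have := d_bounds; have w4' := w4; move=> hd.
apply/setP=> x; rewrite in_set0 in_setI; apply/negP=> /andP[hx hu].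
rewrite U_eq !inE in hu.
case: (Dcase hx) => [[k [hk hx1]]|[k [hk hx1]]]; case/orP: hu => [/orP[h|h]|h]; clash.
Qed.

Lemma D_ne : D != set0.
Proof.
have := d_bounds => hd; case/set0Pn: (Sne (i + 0)) => x hx; apply/set0Pn; exists x.
by apply: (DS (k := 0)) hx => //; case/andP: hd.
Qed.

Lemma D_rest : ~: (U :|: D) != set0.
Proof.
have := d_bounds; have w4' := w4; move=> hd.
case/set0Pn: (Sne (i + d)) => x hx; apply/set0Pn; exists x.
rewrite in_setC in_setU U_eq !in_setU; apply/negP=> /orP[/orP[/orP[h|h]|h]|h']; try clash.
rewrite -in_setU -Dij_eq in h'; case: (Dcase h') => [[k [hk h]]|[k [hk h]]]; clash.
Qed.

Lemma D_closed z z' : z \in D -> e z z' -> z' \notin U -> z' \in D.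
Proof.
have := d_bounds; have w4' := w4; move=> hd.
move=> hz hzz' hn; rewrite U_eq !inE negb_or negb_or in hn; case/andP: hn => /andP[n1 n2] n3.
case: (Dcase hz) => [[k [hk hz']]|[k [hk hz']]]; clear hz; rename hz' into hz.
  have := N1 hz hzz'; case/orP=> [h|/orP[h|/orP[h|h]]].
  - exact: (DS hk).
  - case: k hk hz h => [|k] hk hz h; first by rewrite h in n1.
    exact: (DC (k := k.+1)).
  - have [ek|nk] := eqVneq k.+1 d.
      by rewrite -ek (_ : i + k.+1 = i + k + 1) ?h in n3; lia.
    apply: (DC (k := k.+1)) h; [lia| by rewrite addn1 addnS].
  - by rewrite h in n2.
case: k hk hz => [|k] hk hz; first lia.
rewrite addnS -addn1 in hz.
have := N2 hz hzz'; case/orP=> [h|/orP[h|/orP[h|/orP[h|/orP[h|h]]]]].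
- case: k hk hz h => [|k] hk hz h; first by rewrite h in n1.
  apply: (DC (k := k.+1) _ _ h); lia.
- by rewrite h in n2.
- have [ek|nk] := eqVneq k.+2 d.
    by rewrite -ek (_ : i + k.+2 = i + k + 2) ?h in n3; lia.
  apply: (DC (k := k.+2) _ _ h); [lia| f_equal; lia].
- apply: (DS (k := k) _ _ h); [lia| by []].
- apply: (DC (k := k.+1) _ _ h); [lia| f_equal; lia].
- apply: (DS (k := k.+1) _ _ h); [lia| f_equal; lia].
Qed.

Lemma D_disc : disconnects e U D.
Proof. apply: closed_disc; [exact: D_ne|exact: D_disj|exact: D_rest|exact: D_closed]. Qed.

Lemma U_kcut : is_kcut e U.
Proof.
split; first exact: (closed_cut D_ne D_disj D_rest D_closed).
rewrite /Cij card3; last by rewrite !modn_small.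
have h1 := Csize hi; have h2 := Csize hj.
have h0 := size_at i 0; rewrite addn0 (modn_small hi) in h0; rewrite (modn_small hi) (modn_small hj); lia.
Qed.


Lemma notU x : x \in D -> x \in ~: U.
Proof.
move=> hx; rewrite inE; apply/negP=> hu; move/setP: D_disj => /(_ x).
by rewrite in_setI in_set0 hx hu.
Qed.

Lemma to_c : 1 < d -> exists c, forall y, y \in D -> path_in e (~: U) y c.
Proof.
move=> hd2; have := d_bounds => hd.
case/set0Pn: (Cne (i + 1)) => c hc; exists c.
have cA : c \in ~: U by apply: notU; apply: (DC (k := 1) _ _ hc) => //; lia.
have SA m : m < d -> S ((i + m) %% w) \subset ~: U.
  by move=> hm; apply/subsetP=> z hz; apply: notU; exact: (DS hm _ hz).
have CA m z : 0 < m < d -> z \in C ((i + m) %% w) -> z \in ~: U.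
  by move=> hm hz; apply: notU; exact: (DC hm _ hz).
have claim : forall m, m < d ->
  (forall s, s \in S ((i + m) %% w) -> path_in e (~: U) s c) /\
  (0 < m -> forall u, u \in C ((i + m) %% w) -> path_in e (~: U) u c).
  elim=> [|m IH] hm.
    split=> [s hs|]; last by [].
    rewrite path_in_sym //; apply: (Lconn (k := i + 0)) => //; first exact: SA.
    by rewrite addn0 hc orbT.
  have [IHs _] := IH (ltnW hm).
  have Cp : forall u, u \in C ((i + m.+1) %% w) -> path_in e (~: U) u c.
    move=> u hu; case/set0Pn: (Sne (i + m)) => s' hs'.
    apply: path_in_trans (IHs _ hs').
    apply: (Lconn (k := i + m)) => //; first by apply: SA; lia.
      by apply: (CA m.+1) hu; lia.
    by rewrite (_ : i + m + 1 = i + m.+1) ?hu ?orbT //; lia.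
  split=> [s hs|_]; last exact: Cp.
  case/set0Pn: (Cne (i + m.+1)) => u' hu'.
  apply: path_in_trans (Cp _ hu'); rewrite path_in_sym //.
  apply: (Lconn (k := i + m.+1)) => //; first exact: SA.
    by apply: (CA m.+1) hu'; lia.
  by rewrite hu'.
move=> y /Dcase[[m [hm hy]]|[m [hm hy]]].
  by have [h _] := claim m hm; apply: h.
have [_ h] := claim m (proj2 (andP hm)); apply: h => //; by case/andP: hm.
Qed.

Lemma side_set x : 1 < d -> x \in D -> [set y | path_in e (~: U) x y] = D.
Proof.
move=> hd2 hx; apply/setP=> y; rewrite inE; apply/idP/idP.
  apply: path_in_closed hx => z z' hz; rewrite inE => hz' hzz'.
  exact: D_closed hzz' hz'.
move=> hy; have [c hc] := to_c hd2.
by apply: path_in_trans (hc _ hx) _; rewrite path_in_sym //; apply: hc.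
Qed.

End Pair.

Lemma dd_char i j : i < w -> j < w ->
  (j + w - i %% w) %% w < w /\
  (i + (j + w - i %% w) %% w = j \/ i + (j + w - i %% w) %% w = j + w).
Proof. move=> hi hj; rewrite dd_val //; case: (leqP i j) => ? /=; lia. Qed.

Lemma mod_fix a b : a = b \/ a = b + w -> a %% w = b %% w.
Proof. by case=> ->; rewrite ?modnDr. Qed.

Lemma Cij_sym i j : Cij w T C j i = Cij w T C i j.
Proof. by rewrite /Cij -setUA setUC [T :|: _]setUC. Qed.

Lemma partition i j x : i < w -> j < w -> i != j -> x \notin Cij w T C i j ->
  x \in Dij w C S i j \/ x \in Dij w C S j i.
Proof.
move=> hi hj hij hx; have w4' := w4; have hij' : i <> j by apply/eqP.
have [d1 d2] := dd_char hi hj; have [d1' d2'] := dd_char hj hi.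
have /andP[d0 _] := d_bounds hi hj hij.
have /andP[d0' _] : 0 < (i + w - j %% w) %% w < w.
  by apply: d_bounds => //; rewrite eq_sym.
rewrite /Cij !inE !negb_or in hx; case/andP: hx => /andP[n1 n2] n3.
case: (cover x) => [hT|[m hm]]; first by rewrite hT in n2.
have mw := mod_lt m.
have [mm mE] : exists mm, m %% w = mm by eexists.
rewrite mE in mw hm; rewrite -(modn_small mw) in hm.
have [k1 k2] := dd_char hi mw.
have [k kE] : exists k, (mm + w - i %% w) %% w = k by eexists.
have [d dE] : exists d, (j + w - i %% w) %% w = d by eexists.
have [d' dE'] : exists d', (i + w - j %% w) %% w = d' by eexists.
rewrite kE in k1 k2; rewrite dE in d1 d2 d0; rewrite dE' in d1' d2' d0'.
clear kE mE.
have e1 : forall a, (i + a = mm \/ i + a = mm + w) -> (i + a) %% w = mm %% w.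
  by move=> a h; rewrite (mod_fix h).
have e2 : forall a, (j + a = mm \/ j + a = mm + w) -> (j + a) %% w = mm %% w.
  by move=> a h; rewrite (mod_fix h).
case/orP: hm => hm.
  have [kd|kd] := ltnP k d.
    have [k0|k0] := posnP k.
      have ei : i %% w = mm %% w by rewrite (modn_small hi) (modn_small mw); clear dE dE' e1 e2; lia.
      by rewrite ei hm in n1.
    by left; apply: (DC (k := k) _ (e1 _ _) hm); rewrite ?dE; clear dE dE' e1 e2; lia.
  have [kd'|kd'] := eqVneq k d.
    have ej : j %% w = mm %% w by rewrite (modn_small hj) (modn_small mw); clear dE dE' e1 e2; lia.
    by rewrite ej hm in n3.
  by right; apply: (DC (k := k - d) _ (e2 _ _) hm); rewrite ?dE'; clear dE dE' e1 e2; lia.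
have [kd|kd] := ltnP k d.
  by left; apply: (DS (k := k) _ (e1 _ _) hm); rewrite ?dE; clear dE dE' e1 e2; lia.
by right; apply: (DS (k := k - d) _ (e2 _ _) hm); rewrite ?dE'; clear dE dE' e1 e2; lia.
Qed.

End Wheel.

Theorem lemma3 (V : finType) (e : rel V) (w : nat) (T : {set V})
    (C S : nat -> {set V}) :
  simple_graph e -> connected_graph e -> non_complete e ->
  is_wheel e w T C S ->
  (forall i j, i < w -> j < w -> i != j ->
     is_kcut e (Cij w T C i j) /\
     disconnects e (Cij w T C i j) (Dij w C S i j)) /\
  (forall i j, i < w -> j < w -> i != j ->
     (j + w - i) %% w != 1 -> (j + w - i) %% w != w - 1 ->
     forall P : {set V},
       is_side e (Cij w T C i j) P <-> (P = Dij w C S i j \/ P = Dij w C S j i)) /\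
  (forall i, i < w -> 2 * #|C i| = kappa e - #|T|).
Proof.
move=> [esym _] _ _ W.
split.
  move=> i j hi hj hij; split; [exact: (U_kcut W hi hj hij) | exact: (D_disc W hi hj hij)].
split; last by move=> i hi; exact: (Csize W hi).
move=> i j hi hj hij h1 h2 P.
have w4' := w4 W.
have hji : j != i by rewrite eq_sym.
have [d1 d2] := dd_char hi hj; have [d1' d2'] := dd_char hj hi.
have /andP[d0 _] := d_bounds hi hj hij.
have /andP[d0' _] := d_bounds hj hi hji.
rewrite -{1}(modn_small hi) in h1; rewrite -{1}(modn_small hi) in h2.
have hd : 1 < (j + w - i %% w) %% w by move: h1 d0; case: ((j + w - i %% w) %% w) => [|[|]].
have hd' : 1 < (i + w - j %% w) %% w.
  move: h2 hd d1 d2 d0 d1' d2' d0'; clear h1.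
  have [d dE] : exists d, (j + w - i %% w) %% w = d by eexists.
  have [d' dE'] : exists d', (i + w - j %% w) %% w = d' by eexists.
  rewrite dE dE'; clear dE dE'; move=> h2 *; move/eqP: h2 => h2; lia.
split.
  case=> x hxU ->; case: (partition W hi hj hij hxU) => hx.
    by left; apply: (side_set esym W hi hj hij hd hx).
  right; rewrite -(Cij_sym w T C i j).
  by apply: (side_set esym W hj hi hji hd' hx).
case=> ->.
  case/set0Pn: (D_ne W hi hj hij) => x hx; exists x.
    by have := notU W hi hj hij hx; rewrite inE.
  by rewrite (side_set esym W hi hj hij hd hx).
case/set0Pn: (D_ne W hj hi hji) => x hx; exists x.
  by have := notU W hj hi hji hx; rewrite inE Cij_sym.
by rewrite -(Cij_sym w T C i j) (side_set esym W hj hi hji hd' hx).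
Qed.
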